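(* Let $\beta>0$ and $0<c<1$. For every $\mathrm{v}\in\mathbb{Z}_{\geq 0}$ and every $x\in\mathbb{Z}_{\geq 0}$, $$\check{\xi}_{\mathrm{v}}(x;\beta,c)\;=\;{}_2F_1\Bigl(\genfrac{}{}{0pt}{}{-\mathrm{v},\,-x}{\beta}\Bigm|1-c\Bigr)\;=\;\sum_{k=0}^{\min(\mathrm{v},x)}\frac{(-\mathrm{v})_k(-x)_k}{(\beta)_k\,k!}(1-c)^k\;>\;0 .$$
   Context: $(a)_k=a(a+1)\cdots(a+k-1)$ is the Pochhammer symbol, $(a)_0=1$. The function $\check{\xi}_{\mathrm{v}}$ is the Meixner polynomial $M_{\mathrm{v}}(x;\beta,c^{-1})={}_2F_1(-\mathrm{v},-x;\beta;1-c)$ with the parameter $c$ replaced by $c^{-1}$ (the ''virtual state polynomial'' of the Meixner system). *)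

(* Defs.v *)
From mathcomp Require Import all_boot all_order all_algebra.
Set Implicit Arguments. Unset Strict Implicit. Unset Printing Implicit Defensive.
Import Order.TTheory GRing.Theory Num.Theory.
Local Open Scope ring_scope.

Definition poch {R : ringType} (a : R) (k : nat) : R :=
  \prod_(i < k) (a + i%:R).

Definition hyp2F1_term {R : fieldType} (n : nat) (b g z : R) : R :=
  \sum_(0 <= k < n.+1)
     poch (- n%:R) k * poch b k / (poch g k * (k`!)%:R) * z ^+ k.

Definition meixner {R : fieldType} (n : nat) (x beta c : R) : R :=
  hyp2F1_term n (- x) beta (1 - c^-1).

Definition xi_check {R : fieldType} (v : nat) (x beta c : R) : R :=
  meixner v x beta c^-1.

(* Main.v *)
Require Import Defs.
From mathcomp Require Import all_boot all_order all_algebra.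
From mathcomp Require Import zify.
Import Order.TTheory GRing.Theory Num.Theory.
Local Open Scope ring_scope.

Lemma poch_neg_nat (R : ringType) (n k : nat) :
  poch (- (n%:R : R)) k = (-1) ^+ k * (n ^_ k)%:R.
Proof.
elim: k => [|k IH]; first by rewrite /poch big_ord0 expr0 mul1r ffactn0.
rewrite /poch big_ord_recr /= -/(poch _ _) IH ffactnSr.
have [le|lt] := leqP k n.
  rewrite natrM natrB // exprS.
  by rewrite mulN1r mulNr -!mulrA -mulrN -mulrN opprB addrC.
by rewrite ffact_small // mul0n !mulr0 !mul0r.
Qed.

Theorem mainTheorem1 (R : realFieldType) (beta c : R)
    (hbeta : 0 < beta) (hc0 : 0 < c) (hc1 : c < 1) (v x : nat) :
  xi_check v x%:R beta c =
    \sum_(0 <= k < (minn v x).+1)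
      poch (- v%:R) k * poch (- x%:R) k / (poch beta k * (k`!)%:R) * (1 - c) ^+ k
  /\
  0 < \sum_(0 <= k < (minn v x).+1)
      poch (- v%:R) k * poch (- x%:R) k / (poch beta k * (k`!)%:R) * (1 - c) ^+ k.
Proof.
split.
  rewrite /xi_check /meixner /hyp2F1_term invrK.
  rewrite (big_cat_nat _ (n := (minn v x).+1)) //=; last by lia.
  rewrite -[RHS]addr0; congr (_ + _).
  rewrite big_nat_cond big1 // => k /andP[/andP[h1 h2] _].
  rewrite (poch_neg_nat _ x) ffact_small; last by lia.
  by rewrite !mulr0 !mul0r.
rewrite big_nat_recl // big_nat_cond.
have pb : forall k, 0 < poch beta k.
  move=> k; rewrite /poch; apply: prodr_gt0 => i _.
  by apply: ltr_wpDr => //; rewrite ler0n.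
apply: ltr_pwDl.
  by rewrite /poch !big_ord0 expr0 !mul1r mulr1 invr1.
apply: sumr_ge0 => k /andP[/andP[_ hk] _].
apply: ltW; rewrite !poch_neg_nat.
apply: mulr_gt0; last by apply: exprn_gt0; rewrite subr_gt0.
apply: mulr_gt0; last by rewrite invr_gt0 mulr_gt0 // ltr0n fact_gt0.
rewrite mulrACA -exprMn mulrNN mul1r expr1n mul1r -natrM ltr0n muln_gt0.
rewrite !ffact_gt0; apply/andP; split; lia.
Qed.
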